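(* Let $\psi\subseteq\mathcal{E}_1^\omega\times\mathcal{E}_2^\omega$ be a safety relation. Then for all $\tau_1\in\mathcal{E}_1^\omega,\tau_2\in\mathcal{E}_2^\omega$: $(\tau_1,\tau_2)\in\psi\iff(\tau_1,\tau_2)\in|\psi|_{\mathit{safe}}\iff(\tau_1,\tau_2,\psi)\in\texttt{safe}$.
   Context: For $\tau\in\mathcal{E}^\omega$, $\tau[0..n)$ denotes its finite prefix of length $n$. Safety closure: $|\psi|_{\mathit{safe}}=\{(\tau_1,\tau_2)\mid\forall n\in\mathbb{N}.\ \exists\tau_1'\in\mathcal{E}_1^\omega,\tau_2'\in\mathcal{E}_2^\omega.\ (\tau_1[0..n)\cdot\tau_1',\ \tau_2[0..n)\cdot\tau_2')\in\psi\}$. A trace relation $\psi$ is a safety relation iff $|\psi|_{\mathit{safe}}\subseteq\psi$. Derivative: $\Delta_{e_1,e_2}(\psi)=\{(\tau_1,\tau_2)\mid(e_1\tau_1,e_2\tau_2)\in\psi\}$. $\texttt{safe}$ is the greatest fixed point of the monotone operator $\texttt{safeF}(C)=\{(e_1\tau_1,e_2\tau_2,\psi)\mid\Delta_{e_1,e_2}(\psi)\neq\emptyset\wedge(\tau_1,\tau_2,\Delta_{e_1,e_2}(\psi))\in C\}$ on subsets of $\mathcal{E}_1^\omega\times\mathcal{E}_2^\omega\times\mathcal{P}(\mathcal{E}_1^\omega\times\mathcal{E}_2^\omega)$. *)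

(* Defs.v *)
From Stdlib Require Import Arith.

Definition trace (E : Type) : Type := nat -> E.

Definition trel (E1 E2 : Type) : Type := trace E1 -> trace E2 -> Prop.

Definition scons {E : Type} (e : E) (tau : trace E) : trace E :=
  fun n => match n with 0 => e | S k => tau k end.

Definition pcat {E : Type} (n : nat) (tau tau' : trace E) : trace E :=
  fun i => if i <? n then tau i else tau' (i - n).

Definition safe_closure {E1 E2 : Type} (psi : trel E1 E2) : trel E1 E2 :=
  fun t1 t2 => forall n : nat, exists (t1' : trace E1) (t2' : trace E2),
    psi (pcat n t1 t1') (pcat n t2 t2').

Definition safety_relation {E1 E2 : Type} (psi : trel E1 E2) : Prop :=
  forall t1 t2, safe_closure psi t1 t2 -> psi t1 t2.

Definition deriv {E1 E2 : Type} (e1 : E1) (e2 : E2) (psi : trel E1 E2) : trel E1 E2 :=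
  fun t1 t2 => psi (scons e1 t1) (scons e2 t2).

Definition tset (E1 E2 : Type) : Type := trace E1 -> trace E2 -> trel E1 E2 -> Prop.

Definition trel_nonempty {E1 E2 : Type} (psi : trel E1 E2) : Prop :=
  exists t1 t2, psi t1 t2.

Definition safeF {E1 E2 : Type} (C : tset E1 E2) : tset E1 E2 :=
  fun s1 s2 psi => exists (e1 : E1) (t1 : trace E1) (e2 : E2) (t2 : trace E2),
    s1 = scons e1 t1 /\ s2 = scons e2 t2 /\
    trel_nonempty (deriv e1 e2 psi) /\ C t1 t2 (deriv e1 e2 psi).

(* safe = greatest fixed point of safeF (Knaster–Tarski: union of all
   post-fixed points C ⊆ safeF C). *)
Definition safe {E1 E2 : Type} : tset E1 E2 :=
  fun s1 s2 psi => exists C : tset E1 E2,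
    (forall a b r, C a b r -> safeF C a b r) /\ C s1 s2 psi.

(* Main.v *)
Require Import Defs.
From Stdlib Require Import Arith Lia FunctionalExtensionality.

Lemma pcat_S {E} (n : nat) (e : E) t x :
  pcat (S n) (scons e t) x = scons e (pcat n t x).
Proof.
  apply functional_extensionality; intros [|k]; unfold pcat, scons; simpl; auto.
Qed.

Lemma pcat_0 {E} (t x : trace E) : pcat 0 t x = x.
Proof.
  apply functional_extensionality; intros i; unfold pcat; simpl.
  rewrite Nat.sub_0_r; auto.
Qed.

Lemma pcat_self {E} n (t : trace E) : pcat n t (fun i => t (i + n)) = t.
Proof.
  apply functional_extensionality; intros i; unfold pcat.
  destruct (Nat.ltb_spec i n); auto. f_equal; lia.
Qed.

Lemma scons_eta {E} (t : trace E) : t = scons (t 0) (fun i => t (S i)).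
Proof.
  apply functional_extensionality; intros [|k]; reflexivity.
Qed.

Lemma safe_to_closure {E1 E2} (C : tset E1 E2) :
  (forall a b r, C a b r -> safeF C a b r) ->
  forall n a b r, C a b r -> exists a' b', r (pcat n a a') (pcat n b b').
Proof.
  intros HC n; induction n; intros a b r H.
  - destruct (HC _ _ _ H) as (e1 & t1 & e2 & t2 & -> & -> & (x & y & Hxy) & _).
    exists (scons e1 x), (scons e2 y). rewrite !pcat_0. exact Hxy.
  - destruct (HC _ _ _ H) as (e1 & t1 & e2 & t2 & -> & -> & _ & HC').
    destruct (IHn _ _ _ HC') as (x & y & Hxy).
    exists x, y. rewrite !pcat_S. exact Hxy.
Qed.

Theorem mainTheorem4 (E1 E2 : Type) (psi : trel E1 E2) :
  safety_relation psi ->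
  forall (t1 : trace E1) (t2 : trace E2),
    (psi t1 t2 <-> safe_closure psi t1 t2) /\
    (safe_closure psi t1 t2 <-> safe t1 t2 psi).
Proof.
  intros Hs t1 t2; split; split.
  - intros H n. exists (fun i => t1 (i + n)), (fun i => t2 (i + n)).
    rewrite !pcat_self. exact H.
  - apply Hs.
  - intros H. exists (fun a b r => safe_closure r a b). split; [|exact H].
    clear. intros a b r H.
    exists (a 0), (fun i => a (S i)), (b 0), (fun i => b (S i)).
    split; [apply scons_eta|]. split; [apply scons_eta|]. split.
    + destruct (H 1) as (x & y & Hxy).
      exists x, y. unfold deriv. rewrite (scons_eta a), (scons_eta b), !pcat_S, !pcat_0 in Hxy. exact Hxy.
    + intros n. destruct (H (S n)) as (x & y & Hxy).
      exists x, y. unfold deriv. rewrite (scons_eta a), (scons_eta b), !pcat_S in Hxy. exact Hxy.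
  - intros (C & HC & H) n. exact (safe_to_closure C HC n _ _ _ H).
Qed.
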